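(* For all $A,r\in\mathbb{N}$ and $\varepsilon>0$ there are $\delta>0$ and $S>0$ such that the following holds. Let $n_1,\ldots,n_r$ be positive integers with $n_i\leq An_j$ for all $i,j$, and let $\Lambda=(\lambda_{i,j})$ be a symmetric non-negative $r\times r$ matrix that is $\varepsilon$-separated and connected. Let $D=\mathrm{diag}(n_1,\ldots,n_r)$, let $y_1,\ldots,y_r$ be an orthonormal basis of $\mathbb{R}^r$ of eigenvectors of $\Lambda$ with eigenvalues $\theta_1\geq\cdots\geq\theta_r$ (so $y_1$ is the Perron–Frobenius eigenvector, chosen with non-negative entries), and let $x_j=D^{-1/2}y_j$. Let $\vec z\in[0,\infty)^r$ and write $\vec z=\sum_j\alpha_jx_j$. Then: (1) $\|\alpha_1x_1\|_2\geq\delta\|\vec z\|_2$; (2) for all $j$, $\|\alpha_jx_j\|_2\leq S\|\vec z\|_2$.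
   Context: $\Lambda$ is $\varepsilon$-separated if for all $i,j$ either $\lambda_{i,j}=0$ or $\varepsilon\leq\lambda_{i,j}\leq 1/\varepsilon$; connected if the graph on $[r]$ with edges $\{i,j\}$ for $\lambda_{i,j}>0$ is connected. The vectors $x_j$ are eigenvectors of $M$, $M_{i,j}=\lambda_{i,j}n_j/\sqrt{n_in_j}$. *)

(* Defs.v *)
From HB Require Import structures.
From mathcomp Require Import all_boot all_order all_algebra.
From mathcomp Require Import reals.
Set Implicit Arguments. Unset Strict Implicit. Unset Printing Implicit Defensive.
Import Order.TTheory GRing.Theory Num.Theory.
Local Open Scope ring_scope.

Definition norm2 {R : realType} {r : nat} (v : 'cV[R]_r) : R :=
  Num.sqrt (\sum_(k < r) v k 0 ^+ 2).

Definition eps_separated {R : realType} {r : nat} (eps : R) (L : 'M[R]_r) : Prop :=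
  forall i j, L i j = 0 \/ (eps <= L i j /\ L i j <= eps^-1).

Definition lam_graph {R : realType} {r : nat} (L : 'M[R]_r) : rel 'I_r :=
  fun i j => 0 < L i j.

Definition lam_connected {R : realType} {r : nat} (L : 'M[R]_r) : Prop :=
  forall i j : 'I_r, connect (lam_graph L) i j.

Definition xvec {R : realType} {r : nat} (n : 'I_r -> nat) (y : 'cV[R]_r) : 'cV[R]_r :=
  \col_k (y k 0 / Num.sqrt (n k)%:R).

(* Main.v *)
Require Import Defs.
From HB Require Import structures.
From mathcomp Require Import all_boot all_order all_algebra.
From mathcomp Require Import reals ring lra zify.
Import Order.TTheory GRing.Theory Num.Theory.
Local Open Scope ring_scope.

Lemma single_le_sum (R : realType) r (F : 'I_r -> R) k0 :
  (forall k, 0 <= F k) -> F k0 <= \sum_k F k.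
Proof. by move=> h; rewrite (bigD1 k0) //= lerDl sumr_ge0. Qed.

Lemma sq_le_sum (R : realType) r (F : 'I_r -> R) :
  (forall k, 0 <= F k) -> \sum_k F k ^+ 2 <= (\sum_k F k) ^+ 2.
Proof.
move=> h; rewrite [X in _ <= X]expr2 mulr_suml; apply: ler_sum => k _.
rewrite expr2; apply: ler_pM => //; exact: single_le_sum.
Qed.

Lemma sqrt_le1 (R : realType) (d a b : R) :
  0 <= d -> 0 <= b -> d ^+ 2 * b <= a -> d * Num.sqrt b <= Num.sqrt a.
Proof.
move=> hd hb h; have -> : d = Num.sqrt (d ^+ 2) by rewrite sqrtr_sqr ger0_norm.
rewrite -sqrtrM ?exprn_ge0 //.
exact: ler_wsqrtr.
Qed.

Lemma sqrt_le2 (R : realType) (d a b : R) :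
  0 <= d -> a <= d ^+ 2 * b -> Num.sqrt a <= d * Num.sqrt b.
Proof.
move=> hd h; have -> : d = Num.sqrt (d ^+ 2) by rewrite sqrtr_sqr ger0_norm.
rewrite -sqrtrM ?exprn_ge0 //.
exact: ler_wsqrtr.
Qed.

Lemma norm2_sx (R : realType) r (n : 'I_r -> nat) (a : R) (y : 'cV[R]_r) :
  (forall k, (0 < n k)%N) ->
  norm2 (a *: xvec n y) = Num.sqrt (\sum_k a ^+ 2 * (y k 0 ^+ 2 / (n k)%:R)).
Proof.
move=> hn; rewrite /norm2; congr Num.sqrt; apply: eq_bigr => k _.
rewrite !mxE exprMn expr_div_n sqr_sqrtr // ler0n //.
Qed.

Lemma path_bound (R : realType) r (L : 'M[R]_r) (Y : 'I_r -> R) q :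
  0 <= q -> (forall k l, 0 < L k l -> q * Y l <= Y k) ->
  forall p k, path (lam_graph L) k p -> q ^+ size p * Y (last k p) <= Y k.
Proof.
move=> hq he; elim=> [|l p IH] k /=; first by rewrite mul1r.
case/andP => hkl hp; rewrite exprS -mulrA; apply: le_trans (he k l hkl).
by rewrite ler_wpM2l // IH.
Qed.

Lemma short_path r (e : rel 'I_r) k j : connect e k j ->
  exists p, [/\ path e k p, last k p = j & (size p < r)%N].
Proof.
case/connectP => p hp ->; case: (shortenP hp) => p' hp' hu _.
exists p'; split => //.
have := uniq_leq_size hu (fun x _ => mem_enum 'I_r x).
by rewrite size_enum_ord.
Qed.
Theorem lemma2p2 (R : realType) (A r : nat) (eps : R) (heps : 0 < eps) :
  exists (delta S : R), 0 < delta /\ 0 < S /\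
  forall (n : 'I_r -> nat) (L : 'M[R]_r) (y : 'I_r -> 'cV[R]_r)
         (theta : 'I_r -> R) (z : 'cV[R]_r) (alpha : 'I_r -> R),
    (forall i, (0 < n i)%N) ->
    (forall i j, (n i <= A * n j)%N) ->
    L^T = L ->
    (forall i j, 0 <= L i j) ->
    eps_separated eps L ->
    lam_connected L ->
    (* y_1, ..., y_r orthonormal basis of eigenvectors of L *)
    (forall i j, \sum_(k < r) y i k 0 * y j k 0 = (i == j)%:R) ->
    (forall j, L *m y j = theta j *: y j) ->
    (forall i j : 'I_r, (i <= j)%N -> theta j <= theta i) ->
    (* y_1 is the Perron-Frobenius eigenvector, with non-negative entries *)
    (forall i : 'I_r, val i = 0%N -> forall k, 0 <= y i k 0) ->
    (forall k, 0 <= z k 0) ->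
    z = \sum_(j < r) alpha j *: xvec n (y j) ->
    (forall i : 'I_r, val i = 0%N ->
       delta * norm2 z <= norm2 (alpha i *: xvec n (y i))) /\
    (forall j, norm2 (alpha j *: xvec n (y j)) <= S * norm2 z).
Proof.
set q : R := Num.min 1 (eps ^+ 2 / (r.+1)%:R).
have hq0 : 0 < q by rewrite lt_min ltr01 divr_gt0 ?exprn_gt0 ?ltr0Sn.
have hq1 : q <= 1 by rewrite ge_min lexx.
have hq2 : q * (r.+1)%:R <= eps ^+ 2.
  by rewrite -ler_pdivlMr ?ltr0Sn // ge_min lexx orbT.
set Q := q ^+ r.
have hQ : 0 < Q by rewrite exprn_gt0.
exists (Q / ((r.+1)%:R * (A.+1)%:R)), (A.+1)%:R.
split; first by rewrite divr_gt0 // mulr_gt0 ?ltr0Sn.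
split; first by rewrite ltr0Sn.
move=> n L y theta z alpha hn hA hsym hL0 hsep hconn hON heig hth hy0 hz0 hz.
have hs k : 0 < Num.sqrt ((n k)%:R : R) by rewrite sqrtr_gt0 ltr0n.
have hsq k : Num.sqrt ((n k)%:R : R) ^+ 2 = (n k)%:R by rewrite sqr_sqrtr ?ler0n.
have F1 k : Num.sqrt (n k)%:R * z k 0 = \sum_j alpha j * y j k 0.
  rewrite hz summxE mulr_sumr; apply: eq_bigr => j _; rewrite !mxE.
  by field; rewrite gt_eqF.
have F2 i : alpha i = \sum_k Num.sqrt (n k)%:R * z k 0 * y i k 0.
  under eq_bigr do rewrite F1 mulr_suml.
  rewrite exchange_big /=.
  rewrite (eq_bigr (fun j => alpha j * (j == i)%:R)); last first.
    by move=> j _; rewrite -hON mulr_sumr; apply: eq_bigr => k _; rewrite mulrA.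
  rewrite (bigD1 i) //= eqxx mulr1 big1 ?addr0 // => j /negbTE ->.
  by rewrite mulr0.
have F3 : \sum_j alpha j ^+ 2 = \sum_k (n k)%:R * z k 0 ^+ 2.
  under eq_bigr do rewrite expr2 {2}F2 mulr_sumr.
  rewrite exchange_big /=; apply: eq_bigr => k _.
  have -> : (n k)%:R * z k 0 ^+ 2 =
    (Num.sqrt (n k)%:R * z k 0) * (Num.sqrt (n k)%:R * z k 0).
    by rewrite -[X in X * z k 0 ^+ 2 = _]hsq; ring.
  rewrite {3}F1 mulr_sumr; apply: eq_bigr => j _; ring.
have hT j l : (n l)%:R * \sum_k y j k 0 ^+ 2 / (n k)%:R <= A%:R.
  apply: (@le_trans _ _ (\sum_k y j k 0 ^+ 2 * A%:R)); last first.
    by rewrite -mulr_suml (eq_bigr _ (fun k _ => expr2 _)) hON eqxx mul1r.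
  rewrite mulr_sumr; apply: ler_sum => k _.
  rewrite mulrCA; apply: ler_wpM2l; first exact: sqr_ge0.
  by rewrite ler_pdivrMr ?ltr0n // -natrM ler_nat.
have hT0 j : 0 <= \sum_k y j k 0 ^+ 2 / (n k)%:R.
  by apply: sumr_ge0 => k _; rewrite divr_ge0 ?sqr_ge0 ?ler0n.
split; last first.
  move=> j; rewrite norm2_sx // /norm2; apply: sqrt_le2; first exact: ler0n.
  rewrite -mulr_sumr.
  have ha : alpha j ^+ 2 <= \sum_l (n l)%:R * z l 0 ^+ 2.
    by rewrite -F3; apply: single_le_sum => k; exact: sqr_ge0.
  apply: le_trans (ler_wpM2r (hT0 j) ha) _.
  rewrite mulr_suml mulr_sumr; apply: ler_sum => l _.
  have := hT j l; have := sqr_ge0 (z l 0); have : (0 : R) <= A%:R by exact: ler0n.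
  rewrite -natr1; nra.
move=> i hi0.
have hr : (0 < r)%N by apply: leq_ltn_trans (leq0n i) (ltn_ord i).
have hA1 : (0 < A)%N by have := hA i i; have := hn i; nia.
set Y : 'I_r -> R := fun k => y i k 0.
have hY k : 0 <= Y k := hy0 i hi0 k.
have hYn : \sum_k Y k ^+ 2 = 1.
  by rewrite (eq_bigr _ (fun k _ => expr2 _)) hON eqxx.
pose km := [arg max_(k > i) Y k]%O.
have hm k : Y k <= Y km by rewrite /km; case: arg_maxP => // j _ h; exact: h.
set m := Y km.
have hrm : 1 <= r%:R * m ^+ 2.
  have : \sum_k Y k ^+ 2 <= \sum_(k < r) m ^+ 2.
    by apply: ler_sum => k _; rewrite !expr2; apply: ler_pM => //; exact: hm.
  by rewrite hYn sumr_const card_ord mulr_natl.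
have hm0 : 0 < m.
  rewrite lt_def hY andbT; apply/eqP => h0; move: hrm.
  by rewrite h0 expr0n mulr0 ler10.
have heigk k : \sum_l L k l * Y l = theta i * Y k.
  by move/(congr1 (fun M : 'M[R]_(r, 1) => M k 0)): (heig i); rewrite !mxE.
have hLe k l : L k l <= eps^-1.
  by case: (hsep k l) => [->|[]//]; rewrite invr_ge0 ltW.
have hth1 : theta i <= r%:R / eps.
  have : theta i * m <= r%:R / eps * m.
    rewrite -heigk; apply: (@le_trans _ _ (\sum_(l < r) eps^-1 * m)).
      by apply: ler_sum => l _; apply: ler_pM => //; exact: hm.
    by rewrite sumr_const card_ord le_eqVlt; apply/orP; left; apply/eqP; ring.
  by rewrite ler_pM2r.
have hedge k l : 0 < L k l -> q * Y l <= Y k.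
  move=> hkl.
  have hel : eps <= L k l.
    by case: (hsep k l) => [h|[]//]; rewrite h ltxx in hkl.
  have h1 : eps * Y l <= theta i * Y k.
    rewrite -heigk; apply: (@le_trans _ _ (L k l * Y l)).
      by apply: ler_wpM2r.
    by apply: (@single_le_sum R r (fun l => L k l * Y l)) => l'; apply: mulr_ge0.
  have h2 : theta i * Y k <= r%:R / eps * Y k by apply: ler_wpM2r.
  have h3 : eps ^+ 2 * Y l <= r%:R * Y k.
    have := ler_wpM2l (ltW heps) (le_trans h1 h2).
    have -> : eps * (r%:R / eps * Y k) = r%:R * Y k by field; rewrite gt_eqF.
    by rewrite mulrA -expr2.
  have hr0 : (0 : R) <= r%:R by exact: ler0n.
  have := hY l; have := hY k; move: hq2; rewrite -natr1; nra.
have hpk k : Q * m <= Y k.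
  have [p [hp hl hps]] := @short_path r _ k km (hconn k km).
  have := @path_bound R r L Y q (ltW hq0) hedge p k hp; rewrite hl => h.
  apply: le_trans h; apply: ler_wpM2r; first exact: ltW.
  exact: ler_wiXn2l (ltW hq0) hq1 _ _ (ltnW hps).
set c := Q * m.
have hc0 : 0 <= c by rewrite mulr_ge0 ?ltW.
have hsz k : 0 <= Num.sqrt (n k)%:R * z k 0 by rewrite mulr_ge0 ?sqrtr_ge0.
have hal : c * \sum_k Num.sqrt (n k)%:R * z k 0 <= alpha i.
  rewrite (F2 i) mulr_sumr; apply: ler_sum => k _.
  by rewrite mulrC; apply: ler_wpM2l; [exact: hsz | exact: hpk].
have hal2 : c ^+ 2 * \sum_k (n k)%:R * z k 0 ^+ 2 <= alpha i ^+ 2.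
  apply: (@le_trans _ _ (c ^+ 2 * (\sum_k Num.sqrt (n k)%:R * z k 0) ^+ 2)).
    apply: ler_wpM2l; first exact: sqr_ge0.
    have := @sq_le_sum R r _ hsz.
    by rewrite (eq_bigr _ (fun k _ => exprMn _ _ _)) (eq_bigr _ (fun k _ => congr1 (fun x => x * _) (hsq k))).
  have hS : 0 <= \sum_k Num.sqrt (n k)%:R * z k 0 by apply: sumr_ge0.
  rewrite -exprMn !expr2; apply: ler_pM => //; exact: mulr_ge0.
set delta := Q / ((r.+1)%:R * (A.+1)%:R).
have hd0 : 0 <= delta by rewrite divr_ge0 ?mulr_ge0 ?ler0n // ltW.
have hd : delta * ((r.+1)%:R * (A.+1)%:R) = Q.
  by rewrite /delta; field; rewrite !(addrC 1) !natr1 !pnatr_eq0.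
have hr0 : (0 : R) < r%:R by rewrite ltr0n.
clearbody delta.
have key : delta ^+ 2 * A%:R <= c ^+ 2.
  have e1 : delta ^+ 2 * (A%:R * r%:R) <= Q ^+ 2.
    rewrite -hd exprMn; apply: ler_wpM2l; first exact: sqr_ge0.
    rewrite -!natrM -natrX ler_nat; apply: (@leq_trans (r.+1 * A.+1)).
      by rewrite mulnC leq_mul.
    by rewrite expnS expn1 leq_pmulr ?muln_gt0.
  have e2 : Q ^+ 2 <= c ^+ 2 * r%:R.
    rewrite /c exprMn -mulrA -[X in X <= _]mulr1 ler_wpM2l ?sqr_ge0 //.
    by rewrite mulrC.
  by rewrite -(ler_pM2r hr0) -mulrA; apply: le_trans e1 e2.
pose T := \sum_k Y k ^+ 2 / (n k)%:R.
rewrite norm2_sx // /norm2; apply: sqrt_le1 => //.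
  by apply: sumr_ge0 => k _; exact: sqr_ge0.
have -> : \sum_k alpha i ^+ 2 * (y i k 0 ^+ 2 / (n k)%:R) = alpha i ^+ 2 * T.
  by rewrite mulr_sumr.
have hT0' : 0 <= T by apply: sumr_ge0 => k _; rewrite divr_ge0 ?sqr_ge0 ?ler0n.
have hT1 l : 1 <= A%:R * ((n l)%:R * T).
  have : \sum_k Y k ^+ 2 <= A%:R * ((n l)%:R * T).
    rewrite mulrA mulr_sumr; apply: ler_sum => k _.
    rewrite mulrCA -[X in X <= _]mulr1; apply: ler_wpM2l; first exact: sqr_ge0.
    by rewrite ler_pdivlMr ?ltr0n // mul1r -natrM ler_nat.
  by rewrite hYn.
apply: le_trans (ler_wpM2r hT0' hal2).
rewrite mulr_sumr mulr_sumr mulr_suml; apply: ler_sum => l _.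
have hnT : 0 <= (n l)%:R * T by rewrite mulr_ge0 ?ler0n.
have hu : delta ^+ 2 <= c ^+ 2 * ((n l)%:R * T).
  apply: (@le_trans _ _ (delta ^+ 2 * (A%:R * ((n l)%:R * T)))).
    rewrite -[X in X <= _]mulr1 ler_wpM2l //; exact: sqr_ge0.
  by rewrite mulrA; apply: ler_wpM2r.
apply: le_trans (ler_wpM2r (sqr_ge0 (z l 0)) hu) _.
by rewrite le_eqVlt; apply/orP; left; apply/eqP; ring.
Qed.
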